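(* Let $w\in\mathfrak{S}_n$ be Bruhat irreducible and almost reducible at $(J,i)$. Then $J=\{s_1,\ldots,s_i\}$ or $J=\{s_i,\ldots,s_{n-1}\}$.
   Context: $\mathfrak{S}_n$ is the Coxeter group with $S=\{s_1,\ldots,s_{n-1}\}$, $s_i=(i\ i{+}1)$, length $\ell$. $\supp(x)$ is the set of simple generators in a reduced word for $x$; $D_L(x)=\{s\in S:\ell(sx)<\ell(x)\}$, $D_R(x)=\{s\in S:\ell(xs)<\ell(x)\}$. For $J\subseteq S$, $x=x^Jx_J$ is the parabolic decomposition with $x_J$ in the subgroup $W_J$ generated by $J$ and $x^J$ the minimal-length element of $xW_J$. It is a BP-decomposition if $\supp(x^J)\cap J\subseteq D_L(x_J)$. $w$ is Bruhat irreducible if $\supp(w)=S$ and $w$ cannot be written as $w=w'w''$ with $w',w''\neq e$ and $\supp(w')\cap\supp(w'')=\emptyset$. A Bruhat irreducible $w$ is almost reducible at $(J,i)$ if $w=w^Jw_J$ is a BP-decomposition with $\supp(w^J)\cap J=\{s_i\}$ and $s_i\notin D_L(w)$, $s_i\notin D_R(w)$. *)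

(* Defs.v *)
From mathcomp Require Import all_boot all_fingroup.
Set Implicit Arguments. Unset Strict Implicit. Unset Printing Implicit Defensive.

(* Generators are indexed 0-based by k : 'I_n ; k stands for the paper's
   s_{k+1} = (k+1  k+2), realised as the transposition of the positions
   k and k+1 of 'I_n.+1.  The group law is mathcomp's permutation product. *)
Section Coxeter.
Variable n : nat.

Definition sgen (k : 'I_n) : 'S_n.+1 :=
  tperm (widen_ord (leqnSn n) k) (lift ord0 k).

Definition prod_word (t : seq 'I_n) : 'S_n.+1 := (\prod_(k <- t) sgen k)%g.

(* Coxeter length: least size of a word with product w.  Every element of
   S_{n+1} has length <= n(n+1)/2 < (n+1)^2, so the search bound is harmless. *)
Definition coxlen (w : 'S_n.+1) : nat :=
  find (fun m => [exists t : m.-tuple 'I_n, prod_word t == w])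
       (iota 0 (n.+1 ^ 2)).

Definition supp (x : 'S_n.+1) : {set 'I_n} :=
  [set k | [exists t : (coxlen x).-tuple 'I_n, (prod_word t == x) && (k \in t)]].

Definition DL (x : 'S_n.+1) : {set 'I_n} :=
  [set k | coxlen (sgen k * x)%g < coxlen x].
Definition DR (x : 'S_n.+1) : {set 'I_n} :=
  [set k | coxlen (x * sgen k)%g < coxlen x].

Definition WJ (J : {set 'I_n}) : {set 'S_n.+1} := <<[set sgen j | j in J]>>%g.

Definition parabolic_decomp (J : {set 'I_n}) (x xJup xJdown : 'S_n.+1) : Prop :=
  [/\ x = (xJup * xJdown)%g, xJdown \in WJ J &
      forall y, y \in WJ J -> coxlen xJup <= coxlen (x * y)%g].

Definition BP_decomp (J : {set 'I_n}) (x xJup xJdown : 'S_n.+1) : Prop :=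
  parabolic_decomp J x xJup xJdown /\ (supp xJup :&: J \subset DL xJdown).

Definition bruhat_irreducible (w : 'S_n.+1) : Prop :=
  supp w = [set: 'I_n] /\
  ~ exists w1 w2 : 'S_n.+1, [/\ w = (w1 * w2)%g, w1 != 1%g, w2 != 1%g &
                               supp w1 :&: supp w2 = set0].

Definition almost_reducible (w : 'S_n.+1) (J : {set 'I_n}) (i : 'I_n) : Prop :=
  bruhat_irreducible w /\
  exists wJup wJdown : 'S_n.+1,
    [/\ BP_decomp J w wJup wJdown, supp wJup :&: J = [set i],
        i \notin DL w & i \notin DR w].

End Coxeter.

(* Main.v *)
Require Import Defs.
From mathcomp Require Import all_boot all_fingroup.
From mathcomp Require Import zify.
Set Implicit Arguments. Unset Strict Implicit. Unset Printing Implicit Defensive.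
Local Open Scope group_scope.

Lemma sgenE (n : nat) (k : 'I_n) (p : 'I_n.+1) :
  (sgen k p : nat) = if (p : nat) == k then k.+1 else if (p : nat) == k.+1 then (k : nat) else p.
Proof.
have Hl : (lift ord0 k : nat) = k.+1 by [].
rewrite /sgen; case: tpermP => [->|->|H1 H2]; rewrite /= ?Hl.
- by rewrite eqxx.
- by rewrite eqn_leq ltnn /= eqxx.
have E1 : (p : nat) != k by apply/eqP => H; apply: H1; apply/val_inj.
have E2 : (p : nat) != k.+1 by apply/eqP => H; apply: H2; apply/val_inj; rewrite /= H.
by rewrite (negPf E1) (negPf E2).
Qed.

Definition pres (n : nat) (x : 'S_n.+1) (j : nat) : bool :=
  [forall p : 'I_n.+1, (p <= j) ==> (x p <= j)].

Lemma presP (n : nat) (x : 'S_n.+1) j :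
  reflect (forall p : 'I_n.+1, p <= j -> x p <= j) (pres x j).
Proof.
apply: (iffP forallP) => H p; first by move=> Hp; exact: (implyP (H p)).
by apply/implyP; apply: H.
Qed.

Lemma pigeon (n : nat) (x : 'S_n.+1) (P : pred 'I_n.+1) :
  (forall p, P p -> P (x p)) -> forall y, P (x y) -> P y.
Proof.
move=> HP y Hy.
have Hsub : [set x p | p in P] \subset [set p | P p].
  by apply/subsetP => z /imsetP [p Pp ->]; rewrite inE; apply: HP.
have Heq : [set x p | p in P] = [set p | P p].
  apply/eqP; rewrite eqEcard Hsub /= card_imset; last exact: perm_inj.
  by rewrite cardsE.
have : x y \in [set x p | p in P] by rewrite Heq inE.
by case/imsetP => p Pp /perm_inj ->.
Qed.

Lemma pres_inv (n : nat) (x : 'S_n.+1) j y : pres x j -> (x y <= j) = (y <= j).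
Proof.
move/presP => H; apply/idP/idP; last exact: H.
exact: (pigeon (P := fun p : 'I_n.+1 => p <= j)).
Qed.

Lemma pres_invert (n : nat) (x : 'S_n.+1) j : pres x j -> pres x^-1 j.
Proof.
move=> H; apply/presP => p Hp.
by rewrite -(pres_inv _ H) permKV.
Qed.

Lemma pres_invertE (n : nat) (x : 'S_n.+1) j : pres x^-1 j = pres x j.
Proof.
apply/idP/idP; last exact: pres_invert.
by move/pres_invert; rewrite invgK.
Qed.

Lemma pres_mul (n : nat) (x y : 'S_n.+1) j : pres x j -> pres y j -> pres (x * y) j.
Proof.
move=> /presP Hx /presP Hy; apply/presP => p Hp.
by rewrite permM; apply: Hy; apply: Hx.
Qed.

Lemma pres1 (n : nat) j : pres (1 : 'S_n.+1) j.
Proof. by apply/presP => p; rewrite perm1. Qed.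

Lemma pres_top (n : nat) (x : 'S_n.+1) j : n <= j -> pres x j.
Proof. move=> H; apply/presP => p _; have := ltn_ord (x p); lia. Qed.

Lemma pres_sgen (n : nat) (k : 'I_n) j : k != j :> nat -> pres (sgen k) j.
Proof.
move=> Hk; apply/presP => p Hp; rewrite sgenE.
case: eqP => H1; first by lia.
case: eqP => H2; lia.
Qed.

Lemma pres_word (n : nat) (t : seq 'I_n) (j : 'I_n) : j \notin t -> pres (prod_word t) j.
Proof.
rewrite /prod_word; elim: t => [|a t IH]; first by rewrite big_nil pres1.
rewrite inE negb_or big_cons => /andP [Ha Ht].
apply: pres_mul; last exact: IH.
by apply: pres_sgen; rewrite eq_sym.
Qed.

Definition invset (n : nat) (x : 'S_n.+1) : {set 'I_n.+1 * 'I_n.+1} :=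
  [set pq : 'I_n.+1 * 'I_n.+1 | (pq.1 < pq.2) && (x pq.2 < x pq.1)].
Definition ninv (n : nat) (x : 'S_n.+1) := #|invset x|.

Lemma sgen_mono (n : nat) (k : 'I_n) (y z : 'I_n.+1) :
  ~~ (((y:nat) == k) && ((z:nat) == k.+1)) -> ~~ (((y:nat) == k.+1) && ((z:nat) == k)) ->
  (sgen k z < sgen k y) = (z < y).
Proof.
move=> H1 H2; rewrite !sgenE.
case: (eqVneq (y:nat) k) H1 H2 => Hy; case: (eqVneq (z:nat) k) => Hz;
case: (eqVneq (y:nat) k.+1) => Hy'; case: (eqVneq (z:nat) k.+1) => Hz' //=; lia.
Qed.

Lemma sgen_widen (n : nat) (k : 'I_n) : (sgen k (widen_ord (leqnSn n) k) : nat) = k.+1.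
Proof. by rewrite sgenE /= eqxx. Qed.

Lemma sgen_lift (n : nat) (k : 'I_n) : (sgen k (lift ord0 k) : nat) = k.
Proof. by rewrite sgenE /= eqn_leq ltnn /= eqxx. Qed.

Lemma inv_step (n : nat) (x : 'S_n.+1) (k : 'I_n) :
  let a := x^-1 (widen_ord (leqnSn n) k) in let b := x^-1 (lift ord0 k) in
  ninv (x * sgen k) + (b < a) = ninv x + (a < b).
Proof.
move=> a b.
have Hxa : x a = widen_ord (leqnSn n) k by rewrite /a permKV.
have Hxb : x b = lift ord0 k by rewrite /b permKV.
have Hab : a != b.
  apply/eqP => E; have := congr1 (fun y => nat_of_ord (x y)) E.
  by rewrite /= Hxa Hxb /= /bump /=; lia.
have Pa : forall p : 'I_n.+1, (x p : nat) = k -> p = a.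
  by move=> p Hp; apply: (@perm_inj _ x); rewrite Hxa; apply: val_inj.
have Pb : forall p : 'I_n.+1, (x p : nat) = k.+1 -> p = b.
  by move=> p Hp; apply: (@perm_inj _ x); rewrite Hxb; apply: val_inj.
pose pi := if a < b then (a, b) else (b, a).
have E1 : invset (x * sgen k) :\ pi = invset x :\ pi.
  apply/setP => [[p q]]; rewrite !inE /= !permM.
  case: (eqVneq (p, q) pi) => //= Hpq.
  case: (ltnP p q) => //= Hlt.
  apply: sgen_mono; apply/negP => /andP [/eqP E /eqP F].
  - move: Hpq; rewrite (Pa _ E) (Pb _ F) /pi.
    by rewrite (_ : a < b) ?eqxx //; rewrite -(Pa _ E) -(Pb _ F).
  - move: Hpq; rewrite (Pa _ F) (Pb _ E) /pi.
    have -> : (a < b) = false by apply/negbTE; rewrite -leqNgt -(Pa _ F) -(Pb _ E) ltnW.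
    by rewrite eqxx.
have Va : (((x * sgen k)%g a) : nat) = k.+1 by rewrite permM Hxa sgen_widen.
have Vb : (((x * sgen k)%g b) : nat) = k by rewrite permM Hxb sgen_lift.
have Wa : (x a : nat) = k by rewrite Hxa.
have Wb : (x b : nat) = k.+1 by rewrite Hxb.
have Hab' : (a : nat) != b by [].
have E2 : (pi \in invset (x * sgen k)) = (a < b).
  rewrite /pi; case: ltnP => H; rewrite inE /= ?Va ?Vb; lia.
have E3 : (pi \in invset x) = (b < a).
  rewrite /pi; case: ltnP => H; rewrite inE /= ?Wa ?Wb; lia.
rewrite /ninv (cardsD1 pi (invset (x * sgen k))) (cardsD1 pi (invset x)) E1 E2 E3.
by rewrite addnAC [RHS]addnAC (addnC (a < b)). 
Qed.

Lemma inv_step' (n : nat) (x : 'S_n.+1) (k : 'I_n) :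
  ninv (x * sgen k) + (x^-1 (lift ord0 k) < x^-1 (widen_ord (leqnSn n) k))
  = ninv x + (x^-1 (widen_ord (leqnSn n) k) < x^-1 (lift ord0 k)).
Proof. exact: inv_step. Qed.

Lemma prod_word_rcons (n : nat) (t : seq 'I_n) k :
  prod_word (rcons t k) = prod_word t * sgen k.
Proof. by rewrite /prod_word big_rcons. Qed.

Lemma prod_word_nil (n : nat) : prod_word ([::] : seq 'I_n) = 1.
Proof. by rewrite /prod_word big_nil. Qed.

Lemma inv1 (n : nat) : ninv (1 : 'S_n.+1) = 0.
Proof.
rewrite /ninv (_ : invset _ = set0) ?cards0 //.
apply/setP => [[p q]]; rewrite !inE /= !perm1; apply/negbTE; apply/negP => /andP [H1 H2].
lia.
Qed.

Lemma sgenK (n : nat) (k : 'I_n) : sgen k * sgen k = 1.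
Proof. by apply/permP => p; rewrite permM perm1 /sgen tpermK. Qed.

Lemma inv_le_word (n : nat) (t : seq 'I_n) : ninv (prod_word t) <= size t.
Proof.
elim/last_ind: t => [|t k IH]; first by rewrite prod_word_nil inv1.
rewrite prod_word_rcons size_rcons.
have := inv_step' (prod_word t) k; lia.
Qed.

Lemma increasing_id (n : nat) (y : 'S_n.+1) :
  (forall k : 'I_n, y (widen_ord (leqnSn n) k) < y (lift ord0 k)) -> y = 1.
Proof.
move=> Hinc.
have Hge : forall m (Hm : m < n.+1), m <= y (Ordinal Hm).
  elim => [|m IH] Hm //.
  have Hm' : m < n by [].
  have := Hinc (Ordinal Hm').
  have -> : widen_ord (leqnSn n) (Ordinal Hm') = Ordinal (ltnW Hm) by apply: val_inj.
  have -> : lift ord0 (Ordinal Hm') = Ordinal Hm by apply: val_inj.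
  have := IH (ltnW Hm); lia.
have Hge' : forall p : 'I_n.+1, p <= y p.
  by move=> [m Hm]; apply: Hge.
apply/permP => p; rewrite perm1.
have Hz : p <= y^-1 p.
  apply: (pigeon (x := y) (P := fun q : 'I_n.+1 => p <= q)).
    by move=> q Hq; apply: leq_trans Hq (Hge' q).
  by rewrite permKV.
have := Hge' (y^-1 p); rewrite permKV => H.
have E : y^-1 p = p by apply: val_inj; apply/eqP; rewrite eqn_leq H Hz.
by rewrite -{1}E permKV.
Qed.

Lemma word_exists (n : nat) (x : 'S_n.+1) :
  exists t : seq 'I_n, prod_word t = x /\ size t = ninv x.
Proof.
move: {2}(ninv x) (leqnn (ninv x)) => m; elim: m x => [|m IH] x Hm.
- case: (pickP (fun k : 'I_n => x^-1 (lift ord0 k) < x^-1 (widen_ord (leqnSn n) k))) => [k Hk|Hno].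
    by have := inv_step' x k; rewrite Hk; lia.
  have Ex : x = 1.
    rewrite -(invgK x) (increasing_id (y := x^-1)) ?invg1 // => k.
    have := Hno k => /= /negbT; rewrite -leqNgt leq_eqVlt => /orP [/eqP E|//].
    by move/val_inj/perm_inj: E => E; have := congr1 val E; rewrite /= /bump /=; lia.
  by exists [::]; rewrite prod_word_nil Ex inv1.
- case: (pickP (fun k : 'I_n => x^-1 (lift ord0 k) < x^-1 (widen_ord (leqnSn n) k))) => [k Hk|Hno].
    have Hs := inv_step' x k; rewrite Hk in Hs.
    have E : (x^-1 (widen_ord (leqnSn n) k) < x^-1 (lift ord0 k)) = false by apply/negbTE; rewrite -leqNgt ltnW.
    rewrite E in Hs.
    have [t [Ht St]] := IH (x * sgen k) ltac:(lia).
    exists (rcons t k); rewrite prod_word_rcons Ht -mulgA sgenK mulg1 size_rcons St.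
    split=> //; lia.
  have Ex : x = 1.
    rewrite -(invgK x) (increasing_id (y := x^-1)) ?invg1 // => k.
    have := Hno k => /= /negbT; rewrite -leqNgt leq_eqVlt => /orP [/eqP E|//].
    by move/val_inj/perm_inj: E => E; have := congr1 val E; rewrite /= /bump /=; lia.
  by exists [::]; rewrite prod_word_nil Ex inv1.
Qed.

Lemma inv_lt (n : nat) (x : 'S_n.+1) : ninv x < (n.+1 ^ 2)%N.
Proof.
have -> : (n.+1 ^ 2)%N = #|[set: 'I_n.+1 * 'I_n.+1]| by rewrite cardsT card_prod card_ord mulnn.
apply: proper_card; rewrite properT; apply/eqP => E.
have : (ord0, ord0) \in invset x by rewrite E inE.
by rewrite /invset inE.
Qed.

Lemma coxlen_inv (n : nat) (x : 'S_n.+1) : coxlen x = ninv x.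
Proof.
rewrite /coxlen.
set P := fun m => [exists t : m.-tuple 'I_n, prod_word t == x].
have HP : P (ninv x).
  have [t [Ht St]] := word_exists x.
  have St' : size t == ninv x by rewrite St.
  by apply/existsP; exists (Tuple St'); rewrite /= Ht.
have HnP : forall m, m < ninv x -> ~~ P m.
  move=> m Hm; apply/existsP => [[t /eqP Ht]].
  by have := inv_le_word t; rewrite Ht size_tuple; lia.
set s := iota 0 ((n.+1 ^ 2)%N).
have Hhas : has P s by apply/hasP; exists (ninv x) => //; rewrite mem_iota /= add0n inv_lt.
have Hf := Hhas; rewrite has_find size_iota in Hf.
case: (ltngtP (find P s) (ninv x)) => H.
- have := nth_find 0 Hhas; rewrite nth_iota // add0n => HH.
  by have := HnP _ H; rewrite HH.
- have := before_find 0 H; rewrite nth_iota ?inv_lt // add0n.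
  by rewrite HP.
- by [].
Qed.

Lemma npresP (n : nat) (x : 'S_n.+1) j :
  reflect (exists p : 'I_n.+1, p <= j /\ j < x p) (~~ pres x j).
Proof.
apply: (iffP idP).
  move/forallPn => [p]; rewrite negb_imply -ltnNge => /andP [H1 H2].
  by exists p.
move=> [p [H1 H2]]; apply/presP => H; have := H p H1; lia.
Qed.

Lemma widen_lift_neq (n : nat) (x : 'S_n.+1) (k : 'I_n) :
  (x^-1 (widen_ord (leqnSn n) k) : nat) != x^-1 (lift ord0 k).
Proof.
apply/eqP => /val_inj/perm_inj E; have := congr1 val E; rewrite /= /bump /=; lia.
Qed.

Lemma cross_mono (n : nat) (x : 'S_n.+1) (j : nat) (k : 'I_n) :
  ~~ pres x j -> x^-1 (widen_ord (leqnSn n) k) < x^-1 (lift ord0 k) ->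
  ~~ pres (x * sgen k) j.
Proof.
move=> /npresP [p [Hp Hxp]] Hasc; apply/npresP.
case: (eqVneq (x p : nat) k.+1) => E; last first.
  exists p; split => //; rewrite permM sgenE.
  case: eqP => E1; first lia.
  by rewrite (negPf E).
case: (eqVneq (k : nat) j) => Ekj; last first.
  exists p; split => //; rewrite permM sgenE E eqn_leq ltnn /= eqxx; lia.
exists (x^-1 (widen_ord (leqnSn n) k)); split.
  have Ep : p = x^-1 (lift ord0 k).
    by apply: (@perm_inj _ x); rewrite permKV; apply: val_inj; rewrite /= E.
  by rewrite Ep in Hp; lia.
by rewrite permM permKV sgen_widen; lia.
Qed.

Lemma tight_cross (n : nat) (t : seq 'I_n) :
  size t = ninv (prod_word t) -> forall k, k \in t -> ~~ pres (prod_word t) k.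
Proof.
elim/last_ind: t => [|t a IH] //.
rewrite prod_word_rcons size_rcons => Hs k.
set x := prod_word t.
have Hle := inv_le_word t.
have Hst := inv_step' x a.
have Hab := widen_lift_neq x a.
have Hasc : x^-1 (widen_ord (leqnSn n) a) < x^-1 (lift ord0 a) by rewrite -/x in Hs Hle; lia.
have Hx : size t = ninv x by rewrite -/x in Hs Hle; lia.
rewrite mem_rcons inE => /orP [/eqP ->|Hk]; last by apply: cross_mono => //; apply: IH.
case Hp: (pres x a); last by apply: cross_mono => //; rewrite Hp.
apply/npresP; exists (x^-1 (widen_ord (leqnSn n) a)); split.
  by rewrite -(pres_inv _ Hp) permKV.
by rewrite permM permKV sgen_widen.
Qed.

Lemma supp_pres (n : nat) (x : 'S_n.+1) : supp x = [set k : 'I_n | ~~ pres x k].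
Proof.
apply/setP => k; rewrite !inE; apply/existsP/idP.
  move=> [t /andP [/eqP Ht Hk]].
  rewrite -Ht; apply: tight_cross => //.
  by rewrite size_tuple Ht coxlen_inv.
move=> Hk.
have [t [Ht St]] := word_exists x.
have St' : size t == coxlen x by rewrite St coxlen_inv.
exists (Tuple St'); rewrite /= Ht eqxx /=.
apply: contraR Hk => Hk; rewrite -Ht; exact: pres_word.
Qed.

Lemma DR_char (n : nat) (x : 'S_n.+1) (k : 'I_n) :
  (k \in DR x) = (x^-1 (lift ord0 k) < x^-1 (widen_ord (leqnSn n) k)).
Proof.
rewrite inE !coxlen_inv.
have := inv_step' x k; have := widen_lift_neq x k.
case: (ltnP (x^-1 (lift ord0 k)) (x^-1 (widen_ord (leqnSn n) k))) => H1 H2 H3; lia.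
Qed.

Lemma WJ_pres (n : nat) (J : {set 'I_n}) (v : 'S_n.+1) (j : 'I_n) :
  v \in WJ J -> j \notin J -> pres v j.
Proof.
move=> /gen_prodgP [m [c Hc ->]] Hj.
apply: (big_ind (fun y => pres y j)); first exact: pres1.
  by move=> y z; apply: pres_mul.
move=> l _; have := Hc l => /imsetP [k Hk ->].
apply: pres_sgen; apply: contraNneq Hj => E.
by have -> : j = k by apply: val_inj.
Qed.

Lemma sgen_WJ (n : nat) (J : {set 'I_n}) (k : 'I_n) : k \in J -> sgen k \in WJ J.
Proof. by move=> Hk; rewrite /WJ mem_gen // imset_f. Qed.

Lemma split_perm (n : nat) (x : 'S_n.+1) (c : nat) : pres x c ->
  exists xL xR : 'S_n.+1, [/\ x = xL * xR, x = xR * xL,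
   (forall k, pres x k -> pres xL k /\ pres xR k), (forall k, c <= k -> pres xL k)
   & (forall k, k <= c -> pres xR k)].
Proof.
move=> Hc.
have Hx := presP _ _ Hc.
have HxI := fun y => pres_inv y Hc.
pose fL := fun p : 'I_n.+1 => if p <= c then x p else p.
pose fR := fun p : 'I_n.+1 => if p <= c then p else x p.
have iL : injective fL.
  move=> p q; rewrite /fL; case: ifP => Hp; case: ifP => Hq.
  - exact: perm_inj.
  - by move=> E; have := Hx p Hp; rewrite E; lia.
  - by move=> E; have := Hx q Hq; rewrite -E; lia.
  - by [].
have iR : injective fR.
  move=> p q; rewrite /fR; case: ifP => Hp; case: ifP => Hq.
  - by [].
  - by move=> E; have := HxI q; rewrite -E Hp Hq.
  - by move=> E; have := HxI p; rewrite E Hp Hq.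
  - exact: perm_inj.
exists (perm iL), (perm iR); split.
- apply/permP => p; rewrite !permM !permE /fL /fR.
  case: (boolP (p <= c)) => Hp.
    by rewrite ?HxI ?Hp.
  by rewrite ?(negbTE Hp) ?HxI ?(negbTE Hp).
- apply/permP => p; rewrite !permM !permE /fL /fR.
  case: (boolP (p <= c)) => Hp.
    by rewrite ?HxI ?Hp.
  by rewrite ?(negbTE Hp) ?HxI ?(negbTE Hp).
- move=> k /presP Hk; split; apply/presP => p Hp; rewrite permE ?/fL ?/fR.
    by case: ifP => _ //; apply: Hk.
  by case: ifP => _ //; apply: Hk.
- move=> k Hk; apply/presP => p Hp; rewrite permE /fL.
  by case: ifP => Hpc //; have := Hx p Hpc; lia.
- move=> k Hk; apply/presP => p Hp; rewrite permE /fR.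
  by case: ifP => Hpc //; lia.
Qed.

Lemma swap_lemma (n : nat) (y : 'S_n.+1) (i : 'I_n) :
  (0 < i -> pres y i.-1) -> pres y i.+1 -> ~~ pres y i ->
  (y (widen_ord (leqnSn n) i) : nat) = i.+1 /\ (y (lift ord0 i) : nat) = i.
Proof.
move=> Hm Hp Hn.
have [p [Hpi Hyp]] := npresP _ _ Hn.
have Epi : (p : nat) = i.
  case: (ltnP p i) => H; last by lia.
  have := presP _ _ (Hm ltac:(lia)) p ltac:(lia); lia.
have Ep : p = widen_ord (leqnSn n) i by apply: val_inj.
have Hyi : (y (widen_ord (leqnSn n) i) : nat) = i.+1.
  rewrite -Ep; have := presP _ _ Hp p ltac:(lia); lia.
split => //.
have Hl : (lift ord0 i : nat) = i.+1 by [].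
have H1 := presP _ _ Hp (lift ord0 i) ltac:(lia).
have H2 : (y (lift ord0 i) : nat) != i.+1.
  apply/eqP => E.
  have : y (lift ord0 i) = y (widen_ord (leqnSn n) i) by apply: val_inj; rewrite /= E Hyi.
  move/perm_inj => E'; have := congr1 val E'; rewrite /= /bump /=; lia.
case: (ltnP (y (lift ord0 i)) i) => H3; last by lia.
have Hi0 : 0 < i by lia.
have := pres_inv (lift ord0 i) (Hm Hi0); rewrite Hl; lia.
Qed.

Lemma all_pres_id (n : nat) (y : 'S_n.+1) : (forall k : nat, pres y k) -> y = 1.
Proof.
move=> H; apply/permP => p; rewrite perm1; apply: val_inj => /=.
have H1 := presP _ _ (H p) p (leqnn _).
case: (ltnP (y p) p) => H2; last by lia.
have := pres_inv p (H p.-1); lia.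
Qed.

Lemma final_comb (n : nat) (J : {set 'I_n}) (i : 'I_n) :
  i \in J ->
  (forall k c : 'I_n, k \in J -> c \notin J -> k < c -> c < i -> False) ->
  (forall k c : 'I_n, k \in J -> c \notin J -> i < c -> c < k -> False) ->
  (forall c d : 'I_n, c \in J -> c != i -> d < c -> (forall z, z \in J -> c <= z) -> False) ->
  (forall c d : 'I_n, c \in J -> c != i -> c < d -> (forall z, z \in J -> z <= c) -> False) ->
  (forall a b : 'I_n, a.+1 = i -> (b : nat) = i.+1 -> a \in J -> b \in J -> False) ->
  ((forall k : 'I_n, k \in J -> k = i) -> False) ->
  J = [set k : 'I_n | k <= i] \/ J = [set k : 'I_n | i <= k].
Proof.
move=> iJ G1 G2 G5 G6 G3 G4.
have Up : (forall b : 'I_n, (b : nat) = i.+1 -> b \notin J) ->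
          forall k : 'I_n, k \in J -> k <= i.
  move=> nR k kJ; case: (leqP k i) => // Hik.
  have Hb : i.+1 < n by have := ltn_ord k; lia.
  have bJ := nR (Ordinal Hb) erefl.
  case: (eqVneq (k : nat) i.+1) => Ek.
    have Ek' : k = Ordinal Hb by apply: val_inj.
    by move: bJ; rewrite -Ek' kJ.
  by case: (G2 k (Ordinal Hb) kJ bJ) => /=; lia.
have Down : (forall a : 'I_n, a.+1 = i -> a \notin J) ->
          forall k : 'I_n, k \in J -> i <= k.
  move=> nL k kJ; case: (leqP i k) => // Hik.
  have Ha : i.-1 < n by have := ltn_ord i; lia.
  have aJ := nL (Ordinal Ha) ltac:(rewrite /=; lia).
  case: (eqVneq (k : nat) i.-1) => Ek.
    have Ek' : k = Ordinal Ha by apply: val_inj.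
    by move: aJ; rewrite -Ek' kJ.
  by case: (G1 k (Ordinal Ha) kJ aJ) => /=; lia.
case: (boolP [exists a : 'I_n, (a.+1 == i) && (a \in J)]) => HL;
case: (boolP [exists b : 'I_n, (b == i.+1 :> nat) && (b \in J)]) => HR.
- case/existsP: HL => a /andP [/eqP Ea aJ]; case/existsP: HR => b /andP [/eqP Eb bJ].
  by case: (G3 a b Ea Eb aJ bJ).
- left; case/existsP: HL => a /andP [/eqP Ea aJ].
  have nR : forall b : 'I_n, (b : nat) = i.+1 -> b \notin J.
    by move=> b Eb; apply: contraNN HR => bJ; apply/existsP; exists b; rewrite bJ Eb eqxx.
  apply/setP => k; rewrite inE; apply/idP/idP; first exact: Up.
  move=> Hki; apply/negPn/negP => kJ.
  have Hki' : k < i.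
    rewrite ltn_neqAle Hki andbT; apply/eqP => E; have E' : k = i by apply: val_inj.
    by rewrite E' iJ in kJ.
  case: (boolP [exists k' : 'I_n, (k' \in J) && (k' < k)]) => Hex.
    by case/existsP: Hex => k' /andP [k'J Hk']; case: (G1 k' k k'J kJ Hk' Hki').
  case: (@arg_minnP _ i (fun k => k \in J) (fun k => nat_of_ord k) iJ) => c cJ Hc.
  have Hca : c <= a by apply: Hc.
  have kc : k < c.
    case: (ltnP k c) => // Hck; case: (eqVneq (k : nat) c) => [E|Ne].
      have E' : k = c by apply: val_inj.
      by move: kJ; rewrite E' cJ.
    by move: Hex => /existsPn /(_ c); rewrite cJ /=; lia.
  by case: (G5 c k cJ ltac:(apply/eqP => E; rewrite E in Hca; lia) kc Hc).
- right; case/existsP: HR => b /andP [/eqP Eb bJ].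
  have nL : forall a : 'I_n, a.+1 = i -> a \notin J.
    by move=> a Ea; apply: contraNN HL => aJ; apply/existsP; exists a; rewrite aJ Ea eqxx.
  apply/setP => k; rewrite inE; apply/idP/idP; first exact: Down.
  move=> Hki; apply/negPn/negP => kJ.
  have Hki' : i < k.
    rewrite ltn_neqAle Hki andbT; apply/eqP => E; have E' : k = i by apply: val_inj.
    by rewrite E' iJ in kJ.
  case: (boolP [exists k' : 'I_n, (k' \in J) && (k < k')]) => Hex.
    by case/existsP: Hex => k' /andP [k'J Hk']; case: (G2 k' k k'J kJ Hki' Hk').
  case: (@arg_maxnP _ i (fun k => k \in J) (fun k => nat_of_ord k) iJ) => c cJ Hc.
  have Hcb : b <= c by apply: Hc.
  have kc : c < k.
    case: (ltnP c k) => // Hck; case: (eqVneq (k : nat) c) => [E|Ne].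
      have E' : k = c by apply: val_inj.
      by move: kJ; rewrite E' cJ.
    by move: Hex => /existsPn /(_ c); rewrite cJ /=; lia.
  by case: (G6 c k cJ ltac:(apply/eqP => E; rewrite E in Hcb; lia) kc Hc).
- case: G4 => k kJ.
  have nR : forall b : 'I_n, (b : nat) = i.+1 -> b \notin J.
    by move=> b Eb; apply: contraNN HR => bJ; apply/existsP; exists b; rewrite bJ Eb eqxx.
  have nL : forall a : 'I_n, a.+1 = i -> a \notin J.
    by move=> a Ea; apply: contraNN HL => aJ; apply/existsP; exists a; rewrite aJ Ea eqxx.
  by apply: val_inj; apply/eqP; rewrite eqn_leq (Up nR k kJ) (Down nL k kJ).
Qed.

Lemma triv_neq (a b : nat) : a != b -> ~~ (a < b) -> ~~ (b < a) -> False.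
Proof. lia. Qed.

Lemma succ_neq (m : nat) : m.+1 = m -> False.
Proof. lia. Qed.

Lemma pred_neq (m : nat) : 0 < m -> m.-1 = m -> False.
Proof. lia. Qed.



Theorem proposition5p2 (n : nat) (w : 'S_n.+1) (J : {set 'I_n}) (i : 'I_n) :
  bruhat_irreducible w -> almost_reducible w J i ->
  J = [set k : 'I_n | k <= i] \/ J = [set k : 'I_n | i <= k].
Proof.
move=> _ [[Hs Hirr] [u [v [[[Hw Hv Hmin] HBP] Hi HDL HDR]]]].
have sw : forall k : 'I_n, ~~ pres w k.
  move=> k; have H : k \in supp w by rewrite Hs inE.
  by rewrite supp_pres inE in H.
have ii : i \in supp u :&: J by rewrite Hi inE.
have iJ : i \in J by move: ii; rewrite inE => /andP [].
have iu : ~~ pres u i by move: ii; rewrite inE supp_pres inE => /andP [].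
have uJ : forall k : 'I_n, k \in J -> k != i -> pres u k.
  move=> k kJ ki; apply/negPn/negP => Hk.
  have : k \in supp u :&: J by rewrite inE supp_pres inE Hk kJ.
  by rewrite Hi inE (negbTE ki).
have vJ : forall k : 'I_n, k \notin J -> pres v k.
  by move=> k kJ; apply: WJ_pres Hv kJ.
have uS : forall k : 'I_n, k \notin J -> ~~ pres u k.
  move=> k kJ; apply/negP => Hk; have := sw k; rewrite Hw pres_mul //; exact: vJ.
have irr : forall w1 w2, w = w1 * w2 -> (exists k : 'I_n, ~~ pres w1 k) ->
    (exists k : 'I_n, ~~ pres w2 k) ->
    (forall k : 'I_n, ~~ pres w1 k -> ~~ pres w2 k -> False) -> False.
  move=> w1 w2 E [k1 H1] [k2 H2] D; apply: Hirr; exists w1, w2; split => //.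
  - by apply/eqP => E1; rewrite E1 pres1 in H1.
  - by apply/eqP => E1; rewrite E1 pres1 in H2.
  - apply/setP => k; rewrite inE !supp_pres !inE; apply/negbTE/negP => /andP [A B].
    exact: D A B.
have noDRu : ~~ (u^-1 (lift ord0 i) < u^-1 (widen_ord (leqnSn n) i)).
  rewrite -DR_char inE -leqNgt.
  have Hy : v^-1 * sgen i \in WJ J by rewrite /WJ groupM ?groupV // sgen_WJ.
  by have := Hmin _ Hy; rewrite Hw mulgA mulgK.
have G1 : forall k c : 'I_n, k \in J -> c \notin J -> k < c -> c < i -> False.
  move=> k c kJ cJ Hkc Hci.
  have [vL [vR [Ev1 Ev2 Hp HL HR]]] := split_perm (vJ c cJ).
  apply: (irr (u * vR) vL).
  - by rewrite Hw {1}Ev2 mulgA.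
  - exists i; apply/negP => Hk.
    apply: (negP (sw i)); rewrite Hw Ev2 mulgA; apply: pres_mul Hk _; apply: HL; exact: ltnW Hci.
  - exists k; apply/negP => Hk.
    have Hu : pres u k by apply: uJ => //; apply/eqP => E; move: Hkc; rewrite E => Hkc; have := ltn_trans Hkc Hci; by rewrite ltnn.
    apply: (negP (sw k)); rewrite Hw; apply: pres_mul Hu _; rewrite Ev1.
    by apply: pres_mul Hk _; apply: HR; exact: ltnW Hkc.
  - move=> z H1 H2.
    have zc : z < c.
      case: (ltnP z c) => // H; by move: H2; rewrite HL.
    have zJ : z \in J by apply: contraR H2 => /vJ /Hp [].
    case Hu : (pres u z).
      have Hr : pres vR z by apply: HR; exact: ltnW zc.
      by move: H1; rewrite (pres_mul Hu Hr).
    have zi : z == i by apply: contraFT Hu => /(uJ _ zJ) ->.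
    by move: zc; rewrite (eqP zi) => zc; have := ltn_trans zc Hci; rewrite ltnn.
have G2 : forall k c : 'I_n, k \in J -> c \notin J -> i < c -> c < k -> False.
  move=> k c kJ cJ Hic Hck.
  have [vL [vR [Ev1 Ev2 Hp HL HR]]] := split_perm (vJ c cJ).
  apply: (irr (u * vL) vR).
  - by rewrite Hw {1}Ev1 mulgA.
  - exists i; apply/negP => Hk.
    apply: (negP (sw i)); rewrite Hw Ev1 mulgA; apply: pres_mul Hk _; apply: HR; exact: ltnW Hic.
  - exists k; apply/negP => Hk.
    have Hu : pres u k by apply: uJ => //; apply/eqP => E; move: Hck; rewrite E => Hck; have := ltn_trans Hic Hck; by rewrite ltnn.
    apply: (negP (sw k)); rewrite Hw; apply: pres_mul Hu _; rewrite Ev1.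
    by apply: pres_mul _ Hk; apply: HL; exact: ltnW Hck.
  - move=> z H1 H2.
    have zc : c < z.
      case: (ltnP c z) => // H; by move: H2; rewrite HR.
    have zJ : z \in J by apply: contraR H2 => /vJ /Hp [].
    case Hu : (pres u z).
      have Hl : pres vL z by apply: HL; exact: ltnW zc.
      by move: H1; rewrite (pres_mul Hu Hl).
    have zi : z == i by apply: contraFT Hu => /(uJ _ zJ) ->.
    by move: zc; rewrite (eqP zi) => zc; have := ltn_trans Hic zc; rewrite ltnn.
have G5 : forall c d : 'I_n, c \in J -> c != i -> d < c -> (forall z, z \in J -> c <= z) -> False.
  move=> c d cJ ci Hdc Hmn.
  have [uL [uR [Eu1 Eu2 Hp HL HR]]] := split_perm (uJ c cJ ci).
  apply: (irr uL (uR * v)).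
  - by rewrite Hw {1}Eu1 mulgA.
  - exists d; apply/negP => Hd.
    have dJ : d \notin J by apply/negP => /Hmn; by rewrite leqNgt Hdc.
    apply: (negP (uS d dJ)); rewrite Eu1; apply: pres_mul Hd _; apply: HR; exact: ltnW Hdc.
  - exists i; apply/negP => Hk.
    apply: (negP (sw i)); rewrite Hw Eu1 -mulgA; apply: pres_mul _ Hk; apply: HL; exact: Hmn.
  - move=> z H1 H2.
    have zc : z < c.
      case: (ltnP z c) => // H; by move: H1; rewrite HL.
    case Hv' : (pres v z); last first.
      have zJ : z \in J by apply: contraFT Hv' => /vJ.
      by have := Hmn z zJ; rewrite leqNgt zc.
    have Hr : pres uR z by apply: HR; exact: ltnW zc.
    by move: H2; rewrite (pres_mul Hr Hv').
have G6 : forall c d : 'I_n, c \in J -> c != i -> c < d -> (forall z, z \in J -> z <= c) -> False.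
  move=> c d cJ ci Hcd Hmx.
  have [uL [uR [Eu1 Eu2 Hp HL HR]]] := split_perm (uJ c cJ ci).
  apply: (irr uR (uL * v)).
  - by rewrite Hw {1}Eu2 mulgA.
  - exists d; apply/negP => Hd.
    have dJ : d \notin J by apply/negP => /Hmx; by rewrite leqNgt Hcd.
    apply: (negP (uS d dJ)); rewrite Eu1; apply: pres_mul _ Hd; apply: HL; exact: ltnW Hcd.
  - exists i; apply/negP => Hk.
    apply: (negP (sw i)); rewrite Hw Eu2 -mulgA; apply: pres_mul _ Hk; apply: HR; exact: Hmx.
  - move=> z H1 H2.
    have zc : c < z.
      case: (ltnP c z) => // H; by move: H1; rewrite HR.
    case Hv' : (pres v z); last first.
      have zJ : z \in J by apply: contraFT Hv' => /vJ.
      by have := Hmx z zJ; rewrite leqNgt zc.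
    have Hl : pres uL z by apply: HL; exact: ltnW zc.
    by move: H2; rewrite (pres_mul Hl Hv').
have G3 : forall a b : 'I_n, a.+1 = i -> (b : nat) = i.+1 -> a \in J -> b \in J -> False.
  move=> a b Ea Eb aJ bJ.
  have ai : a != i by apply/eqP => E; apply: (@succ_neq a); rewrite Ea E.
  have bi : b != i by apply/eqP => E; apply: (@succ_neq i); rewrite -Eb E.
  have ya := pres_invert (uJ a aJ ai); have yb := pres_invert (uJ b bJ bi).
  have [E1 E2] : (u^-1 (widen_ord (leqnSn n) i) : nat) = i.+1 /\ (u^-1 (lift ord0 i) : nat) = i.
    apply: swap_lemma.
    - by move=> _; rewrite -Ea.
    - by rewrite -Eb.
    - by rewrite pres_invertE.
  by move: noDRu; rewrite E1 E2 ltnSn.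
have G4 : (forall k : 'I_n, k \in J -> k = i) -> False.
  move=> HJ.
  have vnot : forall k : 'I_n, k != i -> pres v k.
    move=> k ki; apply: vJ; apply/negP => /HJ E; by rewrite E eqxx in ki.
  have vi : ~~ pres v i.
    apply/negP => Hvi.
    have v1 : v = 1.
      apply: all_pres_id => k; case: (ltnP k n) => Hk; last exact: pres_top.
      case: (eqVneq (Ordinal Hk) i) => [E|Ne].
        by have -> : k = i by rewrite -E.
      by have := vnot _ Ne.
    have : i \in DL v by apply: (subsetP HBP).
    by rewrite v1 inE !coxlen_inv mulg1 inv1.
  have [E1 E2] : (v^-1 (widen_ord (leqnSn n) i) : nat) = i.+1 /\ (v^-1 (lift ord0 i) : nat) = i.
    apply: swap_lemma.
    - move=> Hi0; have Hk : i.-1 < n by apply: leq_ltn_trans (leq_pred i) (ltn_ord i).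
      have Ne : Ordinal Hk != i.
        by apply/eqP => E; apply: (pred_neq Hi0); have := congr1 val E.
      by rewrite pres_invertE; exact: (vnot _ Ne).
    - case: (ltnP i.+1 n) => Hk; last exact: pres_top.
      have Ne : Ordinal Hk != i.
        by apply/eqP => E; apply: (@succ_neq i); have := congr1 val E.
      by rewrite pres_invertE; exact: (vnot _ Ne).
    - by rewrite pres_invertE.
  have Ew1 : v^-1 (widen_ord (leqnSn n) i) = lift ord0 i by apply: val_inj; rewrite /= E1.
  have Ew2 : v^-1 (lift ord0 i) = widen_ord (leqnSn n) i by apply: val_inj; rewrite /= E2.
  move: HDR; rewrite DR_char Hw invMg !permM Ew1 Ew2 => H.
  exact: (triv_neq (widen_lift_neq u i) H noDRu).
exact: final_comb iJ G1 G2 G5 G6 G3 G4.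
Qed.
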